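(* Let $D$ be a tournament missing disjoint paths of length 2 and let $C=a_1b_1c_1,\dots,a_kb_kc_k$ be a double cycle in $\Delta(D)$. Writing $v^-$ and $v^{++}$ for $N^-_{D[K(C)]}(v)$ and $N^{++}_{D[K(C)]}(v)$, for every $t\in\{1,\dots,k\}$ (indices modulo $k$): (1) $a_t^{++}=(a_t^-\cup\{b_t\})\setminus\{a_{t+1},b_{t+1},c_{t+1},c_t\}$; (2) $c_t^{++}=(c_t^-\cup\{b_t\})\setminus\{a_{t+1},b_{t+1},c_{t+1},a_t\}$; (3) $b_t^{++}=(b_t^-\cup\{a_t,c_t\})\setminus\{a_{t+1},b_{t+1},c_{t+1}\}$.
   Context: All digraphs are finite oriented graphs; $D[X]$ is the induced subdigraph. $N^+_H(v)$, $N^-_H(v)$ are out/in-neighborhoods in $H$; $N^{++}_H(v)$ is the set of vertices $w\notin N_H^+(v)\cup\{v\}$ with $u\to w$ in $H$ for some $u\in N_H^+(v)$. A missing edge is a pair of distinct non-adjacent vertices; the missing graph is formed by the missing edges. $D$ is a tournament missing disjoint paths of length 2 if its missing graph is a vertex-disjoint union of paths each with exactly two edges. For missing edges $\{x,y\},\{a,b\}$, $\{x,y\}$ loses to $\{a,b\}$ (written $xy\to ab$) if the endpoints can be labelled so that $x\to a$, $b\notin N^+(x)\cup N^{++}(x)$, $y\to b$, $a\notin N^+(y)\cup N^{++}(y)$ (neighborhoods in $D$). $\Delta(D)$ has the missing edges as vertices and arcs $(e,e')$ whenever $e$ loses to $e'$. For missing paths $abc$, $xyz$, $abc\to xyz$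 means each of $ab,bc$ loses to each of $xy,yz$. A double cycle is a sequence $C=a_1b_1c_1,\dots,a_kb_kc_k$ ($k\ge2$) of distinct missing paths of length 2 (components of the missing graph, edges $a_ib_i,b_ic_i$) with $a_ib_ic_i\to a_{i+1}b_{i+1}c_{i+1}$ for all $i$, indices modulo $k$. $K(C)=\{a_i,b_i,c_i:1\le i\le k\}$. *)

(* Defs.v *)
(* A digraph on a finite vertex type V is given by an arc
   relation [arc : rel V] ([arc u v] means u -> v). *)
From mathcomp Require Import all_boot.
Set Implicit Arguments. Unset Strict Implicit. Unset Printing Implicit Defensive.

Section Digraphs.
Variable V : finType.
Variable arc : rel V.

Definition oriented : Prop :=
  (forall x, ~~ arc x x) /\ (forall x y, arc x y -> ~~ arc y x).

(* neighbourhoods in the induced subdigraph D[X] (v is assumed in X) *)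
Definition outN (X : {set V}) (v : V) : {set V} := [set u in X | arc v u].
Definition inN (X : {set V}) (v : V) : {set V} := [set u in X | arc u v].
Definition out2N (X : {set V}) (v : V) : {set V} :=
  [set w in X | [&& w \notin outN X v, w != v &
                   [exists u in outN X v, arc u w]]].

Definition missing (x y : V) : bool := [&& x != y, ~~ arc x y & ~~ arc y x].

(* a b c is a component of the missing graph which is a path with the two
   edges ab, bc *)
Definition missing_path (a b c : V) : Prop :=
  [/\ missing a b, missing b c, a != c, ~~ missing a c &
      forall x w, x \in [set a; b; c] -> missing x w -> w \in [set a; b; c]].

Definition tmdp2 : Prop :=
  oriented /\
  forall x y, missing x y ->
    exists a b c, missing_path a b c /\
      [|| (x == a) && (y == b), (x == b) && (y == a),
          (x == b) && (y == c) | (x == c) && (y == b)].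

(* {x,y} loses to {a,b} with the labelling x->a, y->b; neighbourhoods in D *)
Definition lose_lab (x y a b : V) : bool :=
  [&& arc x a, b \notin outN setT x :|: out2N setT x, arc y b &
      a \notin outN setT y :|: out2N setT y].

Definition loses (x y a b : V) : bool :=
  [|| lose_lab x y a b, lose_lab y x a b, lose_lab x y b a | lose_lab y x b a].

Definition path_beats (a b c x y z : V) : bool :=
  [&& loses a b x y, loses a b y z, loses b c x y & loses b c y z].

(* double cycle a_0 b_0 c_0, ..., a_{k-1} b_{k-1} c_{k-1}, indices mod k *)
Definition double_cycle (k : nat) (a b c : nat -> V) : Prop :=
  [/\ 2 <= k,
      forall i, i < k -> missing_path (a i) (b i) (c i),
      forall i j, i < j -> j < k -> [set a i; b i; c i] != [set a j; b j; c j] &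
      forall i, i < k -> path_beats (a i) (b i) (c i)
                         (a (i.+1 %% k)) (b (i.+1 %% k)) (c (i.+1 %% k))].

Definition KC (k : nat) (a b c : nat -> V) : {set V} :=
  \bigcup_(i < k) [set a i; b i; c i].

End Digraphs.

(* Main.v *)
Require Import Defs.
From mathcomp Require Import all_boot zify.
Set Implicit Arguments. Unset Strict Implicit. Unset Printing Implicit Defensive.

Definition notR (V : finType) (arc : rel V) (v q : V) : bool :=
  q \notin outN arc setT v :|: out2N arc setT v.

Lemma nrarc (V : finType) (arc : rel V) v q : notR arc v q -> ~~ arc v q.
Proof.
rewrite /notR in_setU negb_or => /andP[h _]; apply/negP => hq; move/negP: h; apply.
by rewrite /outN inE in_setT hq.
Qed.

Lemma out2NP (V : finType) (arc : rel V) (X : {set V}) v w :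
  reflect [/\ w \in X, ~~ arc v w, w != v & exists2 u, u \in X & arc v u && arc u w]
    (w \in out2N arc X v).
Proof.
rewrite /out2N /outN !inE; apply: (iffP idP).
- case/and4P => wX h1 h2 /existsP [u /andP [hu huw]]; move: hu; rewrite inE => /andP[uX vu].
  split => //; first by rewrite wX in h1.
  by exists u => //; rewrite vu huw.
- case => wX h1 h2 [u uX /andP[vu uw]]; rewrite wX h1 h2 /=.
  by apply/existsP; exists u; rewrite inE uX vu uw.
Qed.

Lemma notR_out2 (V : finType) (arc : rel V) (X : {set V}) v w :
  w \in out2N arc X v -> ~~ notR arc v w.
Proof.
case/out2NP => _ h1 h2 [u _ /andP[vu uw]].
rewrite /notR negbK in_setU; apply/orP; right.
apply/out2NP; split => //; try by rewrite in_setT.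
by exists u; rewrite ?in_setT ?vu ?uw.
Qed.

Lemma prop_step (V : finType) (arc : rel V) v q u :
  oriented arc -> notR arc v q -> arc v u -> arc u q || arc q u -> arc q u.
Proof.
move=> [irr asym] nR vu /orP[] // uq; exfalso.
have [qv|qv] := eqVneq q v.
  by subst q; move: (asym _ _ vu); rewrite uq.
move/negP: (nR); apply; rewrite in_setU; apply/orP; right.
apply/out2NP; split => //; try by rewrite in_setT.
  exact: (nrarc nR).
by exists u; rewrite ?in_setT ?vu ?uq.
Qed.

Lemma loses_opts (V : finType) (arc : rel V) x y p q :
  loses arc x y p q ->
  [&& arc x p, notR arc x q, arc y q & notR arc y p] ||
  [&& arc x q, notR arc x p, arc y p & notR arc y q].
Proof.
rewrite /loses /lose_lab /notR; case/or4P => /and4P[h1 h2 h3 h4];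
  by rewrite ?h1 ?h2 ?h3 ?h4 ?orbT.
Qed.

Definition caseA (V : finType) (arc : rel V) A B C X Y Z : Prop :=
  [/\ arc A X, arc A Z, arc C X, arc C Z & arc B Y] /\
  [/\ notR arc A Y, notR arc C Y, notR arc B X & notR arc B Z].
Definition caseB (V : finType) (arc : rel V) A B C X Y Z : Prop :=
  [/\ arc A Y, arc C Y, arc B X & arc B Z] /\
  [/\ notR arc A X, notR arc A Z, notR arc C X, notR arc C Z & notR arc B Y].

Ltac kill := match goal with H: is_true (notR ?arc ?v ?q), H': is_true (?arc ?v ?q) |- _ =>
   exfalso; by move: (nrarc H); rewrite H' end.

Lemma cases (V : finType) (arc : rel V) A B C X Y Z :
  path_beats arc A B C X Y Z -> caseA arc A B C X Y Z \/ caseB arc A B C X Y Z.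
Proof.
rewrite /path_beats => /and4P[L1 L2 L3 L4].
move: (loses_opts L1) (loses_opts L2) (loses_opts L3) (loses_opts L4).
do 4 (case/orP => /and4P[? ? ? ?]); try kill;
  first [by left; split; split | by right; split; split].
Qed.

Definition Pb (V : finType) (arc : rel V) A B C u := (arc A u && arc C u) || arc B u.
Definition Gb (V : finType) (arc : rel V) A B C u := arc B u && (arc A u || arc C u).
Definition Exact (V : finType) (arc : rel V) A B C u :=
  (arc A u && arc C u && ~~ arc B u) || (arc B u && ~~ arc A u && ~~ arc C u).

Lemma nr_adj (V : finType) (arc : rel V) v q : notR arc v q -> arc v q || arc q v -> arc q v.
Proof. by move/nrarc/negbTE => ->. Qed.

Lemma stepP (V : finType) (arc : rel V) A B C X Y Z u :
  oriented arc -> caseA arc A B C X Y Z \/ caseB arc A B C X Y Z ->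
  arc u X || arc X u -> arc u Y || arc Y u -> arc u Z || arc Z u ->
  Pb arc A B C u -> Pb arc X Y Z u.
Proof.
move=> o [[[AX AZ CX CZ BY] [nAY nCY nBX nBZ]] | [[AY CY BX BZ] [nAX nAZ nCX nCZ nBY]]]
  hX hY hZ /orP[/andP[Au Cu]|Bu]; rewrite /Pb.
- by rewrite (prop_step o nAY Au hY) orbT.
- by rewrite (prop_step o nBX Bu hX) (prop_step o nBZ Bu hZ).
- by rewrite (prop_step o nAX Au hX) (prop_step o nAZ Au hZ).
- by rewrite (prop_step o nBY Bu hY) orbT.
Qed.

Lemma stepG (V : finType) (arc : rel V) A B C X Y Z u :
  oriented arc -> caseA arc A B C X Y Z \/ caseB arc A B C X Y Z ->
  arc u X || arc X u -> arc u Y || arc Y u -> arc u Z || arc Z u ->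
  Gb arc A B C u -> Gb arc X Y Z u.
Proof.
move=> o [[[AX AZ CX CZ BY] [nAY nCY nBX nBZ]] | [[AY CY BX BZ] [nAX nAZ nCX nCZ nBY]]]
  hX hY hZ /andP[Bu /orP[Au|Cu]]; rewrite /Gb.
- by rewrite (prop_step o nAY Au hY) (prop_step o nBX Bu hX).
- by rewrite (prop_step o nCY Cu hY) (prop_step o nBX Bu hX).
- by rewrite (prop_step o nAX Au hX) (prop_step o nBY Bu hY).
- by rewrite (prop_step o nCX Cu hX) (prop_step o nBY Bu hY).
Qed.

Lemma PG_Exact (V : finType) (arc : rel V) A B C u :
  Pb arc A B C u -> ~~ Exact arc A B C u -> Gb arc A B C u.
Proof. by rewrite /Pb /Gb /Exact; case: (arc A u); case: (arc B u); case: (arc C u). Qed.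

Lemma Exact_nG (V : finType) (arc : rel V) A B C u :
  Exact arc A B C u -> ~~ Gb arc A B C u.
Proof. by rewrite /Gb /Exact; case: (arc A u); case: (arc B u); case: (arc C u). Qed.

Lemma baseP (V : finType) (arc : rel V) A B C X Y Z u :
  caseA arc A B C X Y Z \/ caseB arc A B C X Y Z ->
  (forall p q, p \in [set A; B; C] -> q \in [set X; Y; Z] -> arc p q || arc q p) ->
  u \in [set A; B; C] -> Pb arc X Y Z u.
Proof.
move=> hc adj hu.
have ad : forall q, q \in [set X; Y; Z] -> arc u q || arc q u by move=> q; exact: adj.
have aX : arc u X || arc X u by apply: ad; rewrite !inE eqxx ?orbT.
have aY : arc u Y || arc Y u by apply: ad; rewrite !inE eqxx ?orbT.
have aZ : arc u Z || arc Z u by apply: ad; rewrite !inE eqxx ?orbT.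
move: hu aX aY aZ; rewrite /Pb !inE => /orP[/orP[]|] /eqP -> aX aY aZ;
case: hc => [[[AX AZ CX CZ BY] [nAY nCY nBX nBZ]] | [[AY CY BX BZ] [nAX nAZ nCX nCZ nBY]]].
- by rewrite (nr_adj nAY aY) orbT.
- by rewrite (nr_adj nAX aX) (nr_adj nAZ aZ).
- by rewrite (nr_adj nBX aX) (nr_adj nBZ aZ).
- by rewrite (nr_adj nBY aY) orbT.
- by rewrite (nr_adj nCY aY) orbT.
- by rewrite (nr_adj nCX aX) (nr_adj nCZ aZ).
Qed.

Lemma baseE (V : finType) (arc : rel V) A B C X Y Z u :
  caseA arc A B C X Y Z \/ caseB arc A B C X Y Z ->
  u \in [set X; Y; Z] -> Exact arc A B C u.
Proof.
rewrite /Exact !inE => hc /orP[/orP[]|] /eqP ->;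
case: hc => [[[AX AZ CX CZ BY] [nAY nCY nBX nBZ]] | [[AY CY BX BZ] [nAX nAZ nCX nCZ nBY]]].
- by rewrite AX CX (nrarc nBX).
- by rewrite BX (negbTE (nrarc nAX)) (negbTE (nrarc nCX)) orbT.
- by rewrite BY (negbTE (nrarc nAY)) (negbTE (nrarc nCY)) orbT.
- by rewrite AY CY (nrarc nBY).
- by rewrite AZ CZ (nrarc nBZ).
- by rewrite BZ (negbTE (nrarc nAZ)) (negbTE (nrarc nCZ)) orbT.
Qed.


Lemma in3 (T : finType) (x a b c : T) : x \in [set a; b; c] -> [\/ x = a, x = b | x = c].
Proof. by rewrite !inE => /orP[/orP[]|] /eqP ->; [constructor 1|constructor 2|constructor 3]. Qed.

Lemma missing_sym (V : finType) (arc : rel V) x y : missing arc x y = missing arc y x.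
Proof. by rewrite /missing eq_sym; case: (arc x y); case: (arc y x); rewrite ?andbF ?andbT. Qed.

Lemma sub_triple (V : finType) (arc : rel V) (A B C A' B' C' v : V) :
  missing_path arc A B C -> missing_path arc A' B' C' ->
  v \in [set A; B; C] -> v \in [set A'; B'; C'] -> [set A; B; C] \subset [set A'; B'; C'].
Proof.
move=> [mAB mBC _ _ _] [_ _ _ _ cl] hv hv'.
have mBA : missing arc B A by rewrite missing_sym.
have mCB : missing arc C B by rewrite missing_sym.
have [hA [hB hC]] : A \in [set A'; B'; C'] /\ B \in [set A'; B'; C'] /\ C \in [set A'; B'; C'].
  move: hv'; case/in3: hv => -> hv'.
  - have hB := cl _ _ hv' mAB; have hC := cl _ _ hB mBC; by [].
  - have hA := cl _ _ hv' mBA; have hC := cl _ _ hv' mBC; by [].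
  - have hB := cl _ _ hv' mCB; have hA := cl _ _ hB mBA; by [].
by apply/subsetP => w; case/in3 => ->.
Qed.

Lemma disjT (V : finType) (arc : rel V) k a b c i j v :
  double_cycle arc k a b c -> i < k -> j < k -> i != j ->
  v \in [set a i; b i; c i] -> v \in [set a j; b j; c j] -> False.
Proof.
case=> k2 mp dist _ hi hj hij hv hv'.
have s1 := sub_triple (mp i hi) (mp j hj) hv hv'.
have s2 := sub_triple (mp j hj) (mp i hi) hv' hv.
have e : [set a i; b i; c i] = [set a j; b j; c j] by apply/eqP; rewrite eqEsubset s1 s2.
case: (ltngtP i j) => h.
- by move: (dist i j h hj); rewrite e eqxx.
- by move: (dist j i h hi); rewrite e eqxx.
- by rewrite h eqxx in hij.
Qed.

Lemma adjT (V : finType) (arc : rel V) k a b c i j p q :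
  double_cycle arc k a b c -> i < k -> j < k -> i != j ->
  p \in [set a i; b i; c i] -> q \in [set a j; b j; c j] -> arc p q || arc q p.
Proof.
move=> dc hi hj hij hp hq.
have pq : p != q.
  by apply/eqP => e; subst q; exact: (disjT dc hi hj hij hp hq).
have nm : ~~ missing arc p q.
  apply/negP => m; case: (dc) => [_ mp _ _]; case: (mp i hi) => [_ _ _ _ cl].
  have := cl _ _ hp m => hq'; exact: (disjT dc hi hj hij hq' hq).
move: nm; rewrite /missing pq /= negb_and !negbK.
by case/orP => ->; rewrite ?orbT.
Qed.

Lemma mod2 n k : k <= n < k + k -> n %% k = n - k.
Proof. move=> /andP[h1 h2]. rewrite -{1}(subnK h1) modnDr modn_small //. lia. Qed.
Lemma modcase n k : n < k + k -> (n < k /\ n %% k = n) \/ (k <= n /\ n %% k = n - k).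
Proof. move=> h. case: (ltnP n k) => h1. left; split=>//; exact: modn_small. right; split=>//; apply: mod2; lia. Qed.
Lemma t1 (j m k : nat) : j < k -> 0 < m < k -> (j + m) %% k != j.
Proof. move=> h1 h2. have: j + m < k + k by lia. move/modcase => [[? ->]|[? ->]]; lia. Qed.
Lemma t2 (j m k : nat) : 0 < k -> ((j + m) %% k).+1 %% k = (j + m.+1) %% k.
Proof. move=> hk. by rewrite -addn1 modnDml addn1 addnS. Qed.

Lemma checker (V : finType) (arc : rel V) k a b c j t u :
  oriented arc -> double_cycle arc k a b c -> j < k -> u \in [set a j; b j; c j] ->
  t < k -> t != j -> Exact arc (a t) (b t) (c t) u.
Proof.
move=> o dc hj hu ht htj.
have [k2 mp _ beats] := dc.
have k0 : 0 < k by lia.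
pose e m := (j + m) %% k.
have ek : forall m, e m < k by move=> m; rewrite /e ltn_pmod.
have ej : forall m, 0 < m < k -> e m != j by move=> m hm; exact: t1.
have eS : forall m, e m.+1 = (e m).+1 %% k by move=> m; rewrite /e t2.
have cs : forall i, i < k -> caseA arc (a i) (b i) (c i) (a (i.+1 %% k)) (b (i.+1 %% k)) (c (i.+1 %% k))
    \/ caseB arc (a i) (b i) (c i) (a (i.+1 %% k)) (b (i.+1 %% k)) (c (i.+1 %% k)).
  by move=> i hi; apply: cases; exact: beats.
have adjU : forall i, i < k -> i != j -> forall q, q \in [set a i; b i; c i] -> arc u q || arc q u.
  by move=> i hi hij q hq; apply: (adjT dc hj hi _ hu hq); rewrite eq_sym.
have inA : forall i, a i \in [set a i; b i; c i] by move=> i; rewrite !inE eqxx.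
have inB : forall i, b i \in [set a i; b i; c i] by move=> i; rewrite !inE eqxx ?orbT.
have inC : forall i, c i \in [set a i; b i; c i] by move=> i; rewrite !inE eqxx ?orbT.
have HP : forall m, 0 < m < k -> Pb arc (a (e m)) (b (e m)) (c (e m)) u.
  elim => [//|m IH] hm.
  case: m IH hm => [|m] IH hm.
    have e1 : e 1 = j.+1 %% k by rewrite /e addn1.
    rewrite e1; apply: (baseP (cs j hj)) => // p q hp hq.
    by apply: (adjT dc hj (ltn_pmod _ k0) _ hp hq); rewrite -e1 eq_sym ej.
  have hm' : 0 < m.+1 < k by lia.
  have hm2 : 0 < m.+2 < k by lia.
  have := ej _ hm2; have := ek m.+2; rewrite eS => ek2 ej2.
  apply: (stepP o (cs _ (ek m.+1))); try apply: (adjU _ ek2 ej2); auto.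
have HG : forall d m, 0 < m -> m + d < k -> Gb arc (a (e m)) (b (e m)) (c (e m)) u ->
    Gb arc (a (e (m + d))) (b (e (m + d))) (c (e (m + d))) u.
  elim => [|d IH] m hm hmd hG; first by rewrite addn0.
  have h1 : 0 < (m + d).+1 < k by lia.
  have := ej _ h1; have := ek (m + d).+1; rewrite eS => ek2 ej2.
  rewrite addnS eS; apply: (stepG o (cs _ (ek (m + d)))); try apply: (adjU _ ek2 ej2); auto.
have HE : Exact arc (a (e k.-1)) (b (e k.-1)) (c (e k.-1)) u.
  have ee : (e k.-1).+1 %% k = j.
    by rewrite -eS /e prednK // addnC modnDl modn_small.
  by apply: (baseE (cs _ (ek k.-1))); rewrite ee.
pose m := if j < t then t - j else t + k - j.
have hm : 0 < m < k by rewrite /m; case: ifP => h; lia.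
have em : e m = t.
  rewrite /e /m; case: ifP => h.
    by rewrite subnKC ?modn_small //; lia.
  have -> : j + (t + k - j) = t + k by lia.
  by rewrite modnDr modn_small.
rewrite -em; case E: (Exact _ _ _ _ _) => //.
have G := PG_Exact (HP m hm) (negbT E).
have := HG (k.-1 - m) m (proj1 (andP hm)) ltac:(lia) G.
have -> : m + (k.-1 - m) = k.-1 by lia.
by move/negP: (Exact_nG HE).
Qed.


Lemma ExA (V : finType) (arc : rel V) A B C w : Exact arc A B C w -> arc A w -> arc C w.
Proof. by rewrite /Exact; case: (arc A w); case: (arc B w); case: (arc C w). Qed.
Lemma ExnA (V : finType) (arc : rel V) A B C w : Exact arc A B C w -> ~~ arc A w -> arc B w.
Proof. by rewrite /Exact; case: (arc A w); case: (arc B w); case: (arc C w). Qed.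
Lemma ExnB (V : finType) (arc : rel V) A B C w : Exact arc A B C w -> ~~ arc B w -> arc A w.
Proof. by rewrite /Exact; case: (arc A w); case: (arc B w); case: (arc C w). Qed.
Lemma Ex_swap (V : finType) (arc : rel V) A B C w : Exact arc A B C w = Exact arc C B A w.
Proof. by rewrite /Exact; case: (arc A w); case: (arc B w); case: (arc C w). Qed.
Lemma case_swap (V : finType) (arc : rel V) A B C X Y Z :
  caseA arc A B C X Y Z \/ caseB arc A B C X Y Z ->
  caseA arc C B A X Y Z \/ caseB arc C B A X Y Z.
Proof.
case=> [[[AX AZ CX CZ BY] [nAY nCY nBX nBZ]] | [[AY CY BX BZ] [nAX nAZ nCX nCZ nBY]]].
- by left; split; split.
- by right; split; split.
Qed.

Lemma mem_inN (V : finType) (arc : rel V) (K : {set V}) v w :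
  (w \in inN arc K v) = (w \in K) && arc w v.
Proof. by rewrite /inN inE. Qed.
Lemma mem4 (T : finType) (w x y z c : T) :
  (w \in [set x; y; z; c]) = [|| w == x, w == y, w == z | w == c].
Proof. by rewrite !inE !orbA. Qed.

Lemma mem3 (T : finType) (w x y z : T) :
  (w \in [set x; y; z]) = [|| w == x, w == y | w == z].
Proof. by rewrite !inE !orbA. Qed.

Lemma end_lemma (V : finType) (arc : rel V) (K : {set V}) A B C X Y Z :
  oriented arc ->
  caseA arc A B C X Y Z \/ caseB arc A B C X Y Z ->
  missing arc A B -> B \in K -> X \in K -> Y \in K ->
  (forall w, w \in K -> w \notin [set A; B; C] -> Exact arc A B C w) ->
  (forall w, w \in K -> w \notin [set A; B; C] -> arc A w || arc w A) ->
  (forall w, w \in K -> w \notin [set A; B; C] -> w \notin [set X; Y; Z] ->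
       (arc w X || arc X w) /\ (arc w Y || arc Y w)) ->
  arc B X || arc X B -> arc B Y || arc Y B ->
  out2N arc K A = (inN arc K A :|: [set B]) :\: [set X; Y; Z; C].
Proof.
move=> o hc mAB BK XK YK Hex Hadj HadjS aBX aBY.
have [irr asym] := o.
have nAB : ~~ arc A B by case/and3P: mAB.
have nBA : ~~ arc B A by case/and3P: mAB.
have AneB : A != B by case/and3P: mAB.
apply/setP => w; rewrite in_setD mem4 in_setU mem_inN in_set1.
apply/idP/idP.
- move=> hw; have nRw := notR_out2 hw; case/out2NP: hw => wK nAw wA [u uK /andP[Au uw]].
  have hX : w != X.
    apply/eqP => ew; subst w.
    case: hc => [[[AX _ _ _ _] _]|[_ [nAX _ _ _ _]]]; [by rewrite AX in nAw | by rewrite nAX in nRw].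
  have hY : w != Y.
    apply/eqP => ew; subst w.
    case: hc => [[_ [nAY _ _ _]]|[[AY _ _ _] _]]; [by rewrite nAY in nRw | by rewrite AY in nAw].
  have hZ : w != Z.
    apply/eqP => ew; subst w.
    case: hc => [[[_ AZ _ _ _] _]|[_ [_ nAZ _ _ _]]]; [by rewrite AZ in nAw | by rewrite nAZ in nRw].
  have hC : w != C.
    apply/eqP => ew; subst w.
    have [uT|uT] := boolP (u \in [set A; B; C]).
      case/in3: uT => eu; subst u.
      - by rewrite (negbTE (irr A)) in Au.
      - by rewrite (negbTE nAB) in Au.
      - by rewrite (negbTE (irr C)) in uw.
    by move: (asym _ _ (ExA (Hex u uK uT) Au)); rewrite uw.
  rewrite (negbTE hX) (negbTE hY) (negbTE hZ) (negbTE hC) /=.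
  have [wT|wT] := boolP (w \in [set A; B; C]).
    case/in3: wT => ew.
    - by rewrite ew eqxx in wA.
    - by rewrite ew eqxx orbT.
    - by rewrite ew eqxx in hC.
  have := Hadj w wK wT; rewrite (negbTE nAw) /= => ->.
  by rewrite wK.
- case/andP => hXYZC /orP[/andP[wK wA]|/eqP ew].
  + have nAw : ~~ arc A w by apply/negP => Aw; move: (asym _ _ Aw); rewrite wA.
    have wnA : w != A by apply/eqP => e; subst w; rewrite (negbTE (irr A)) in wA.
    apply/out2NP; split => //.
    have [wT|wT] := boolP (w \in [set A; B; C]).
      case/in3: wT => ew; subst w.
      - by rewrite eqxx in wnA.
      - by rewrite (negbTE nBA) in wA.
      - by rewrite eqxx !orbT in hXYZC.
    have wS : w \notin [set X; Y; Z].
      by rewrite mem3; apply: contra hXYZC => /or3P[]->; rewrite ?orbT.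
    have Bw := ExnA (Hex w wK wT) nAw.
    have [hXw hYw] := HadjS w wK wT wS.
    case: hc => [[[AX _ _ _ _] [_ _ nBX _]]|[[AY _ _ _] [_ _ _ _ nBY]]].
    * by exists X => //; rewrite AX (prop_step o nBX Bw hXw).
    * by exists Y => //; rewrite AY (prop_step o nBY Bw hYw).
  + subst w; apply/out2NP; split => //; first by rewrite eq_sym.
    case: hc => [[[AX _ _ _ _] [_ _ nBX _]]|[[AY _ _ _] [_ _ _ _ nBY]]].
    * by exists X => //; rewrite AX (nr_adj nBX aBX).
    * by exists Y => //; rewrite AY (nr_adj nBY aBY).
Qed.

Lemma mid_lemma (V : finType) (arc : rel V) (K : {set V}) A B C X Y Z :
  oriented arc ->
  caseA arc A B C X Y Z \/ caseB arc A B C X Y Z ->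
  missing arc A B -> missing arc B C -> A \in K -> C \in K -> X \in K -> Y \in K ->
  (forall w, w \in K -> w \notin [set A; B; C] -> Exact arc A B C w) ->
  (forall w, w \in K -> w \notin [set A; B; C] -> arc B w || arc w B) ->
  (forall w, w \in K -> w \notin [set A; B; C] -> w \notin [set X; Y; Z] ->
       (arc w X || arc X w) /\ (arc w Y || arc Y w)) ->
  arc A X || arc X A -> arc A Y || arc Y A ->
  arc C X || arc X C -> arc C Y || arc Y C ->
  out2N arc K B = (inN arc K B :|: [set A; C]) :\: [set X; Y; Z].
Proof.
move=> o hc mAB mBC AK CK XK YK Hex Hadj HadjS aAX aAY aCX aCY.
have [irr asym] := o.
have nAB : ~~ arc A B by case/and3P: mAB.
have nBA : ~~ arc B A by case/and3P: mAB.
have AneB : A != B by case/and3P: mAB.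
have nBC : ~~ arc B C by case/and3P: mBC.
have nCB : ~~ arc C B by case/and3P: mBC.
have BneC : B != C by case/and3P: mBC.
apply/setP => w; rewrite in_setD mem3 in_setU mem_inN in_set2.
apply/idP/idP.
- move=> hw; have nRw := notR_out2 hw; case/out2NP: hw => wK nBw wB [u uK /andP[Bu uw]].
  have hX : w != X.
    apply/eqP => ew; subst w.
    case: hc => [[_ [_ _ nBX _]]|[[_ _ BX _] _]]; [by rewrite nBX in nRw | by rewrite BX in nBw].
  have hY : w != Y.
    apply/eqP => ew; subst w.
    case: hc => [[[_ _ _ _ BY] _]|[_ [_ _ _ _ nBY]]]; [by rewrite BY in nBw | by rewrite nBY in nRw].
  have hZ : w != Z.
    apply/eqP => ew; subst w.
    case: hc => [[_ [_ _ _ nBZ]]|[[_ _ _ BZ] _]]; [by rewrite nBZ in nRw | by rewrite BZ in nBw].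
  rewrite (negbTE hX) (negbTE hY) (negbTE hZ) /=.
  have [wT|wT] := boolP (w \in [set A; B; C]).
    case/in3: wT => ew.
    - by rewrite ew eqxx orbT.
    - by rewrite ew eqxx in wB.
    - by rewrite ew eqxx !orbT.
  have := Hadj w wK wT; rewrite (negbTE nBw) /= => ->.
  by rewrite wK.
- case/andP => hXYZ /orP[/andP[wK wB]|/orP[]/eqP ew].
  + have nBw : ~~ arc B w by apply/negP => Bw; move: (asym _ _ Bw); rewrite wB.
    have wnB : w != B by apply/eqP => e; subst w; rewrite (negbTE (irr B)) in wB.
    apply/out2NP; split => //.
    have [wT|wT] := boolP (w \in [set A; B; C]).
      case/in3: wT => ew; subst w.
      - by rewrite (negbTE nAB) in wB.
      - by rewrite eqxx in wnB.
      - by rewrite (negbTE nCB) in wB.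
    have wS : w \notin [set X; Y; Z] by rewrite mem3.
    have Aw := ExnB (Hex w wK wT) nBw.
    have [hXw hYw] := HadjS w wK wT wS.
    case: hc => [[[_ _ _ _ BY] [nAY _ _ _]]|[[_ _ BX _] [nAX _ _ _ _]]].
    * by exists Y => //; rewrite BY (prop_step o nAY Aw hYw).
    * by exists X => //; rewrite BX (prop_step o nAX Aw hXw).
  + subst w; apply/out2NP; split => //.
    case: hc => [[[_ _ _ _ BY] [nAY _ _ _]]|[[_ _ BX _] [nAX _ _ _ _]]].
    * by exists Y => //; rewrite BY (nr_adj nAY aAY).
    * by exists X => //; rewrite BX (nr_adj nAX aAX).
  + subst w; apply/out2NP; split => //; first by rewrite eq_sym.
    case: hc => [[[_ _ _ _ BY] [_ nCY _ _]]|[[_ _ BX _] [_ _ nCX _ _]]].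
    * by exists Y => //; rewrite BY (nr_adj nCY aCY).
    * by exists X => //; rewrite BX (nr_adj nCX aCX).
Qed.


Lemma set3C (T : finType) (x y z : T) : [set x; y; z] = [set z; y; x].
Proof. apply/setP => w; rewrite !inE; by case: (w == x); case: (w == y); case: (w == z). Qed.

Theorem lemma4p10 (V : finType) (arc : rel V) (k : nat) (a b c : nat -> V) :
  tmdp2 arc -> double_cycle arc k a b c ->
  forall t, t < k ->
    let K := KC k a b c in
    let s := t.+1 %% k in
    [/\ out2N arc K (a t) =
          (inN arc K (a t) :|: [set b t]) :\: [set a s; b s; c s; c t],
        out2N arc K (c t) =
          (inN arc K (c t) :|: [set b t]) :\: [set a s; b s; c s; a t] &
        out2N arc K (b t) =
          (inN arc K (b t) :|: [set a t; c t]) :\: [set a s; b s; c s]].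
Proof.
move=> [o _] dc t ht K s.
have [k2 mp dist beats] := dc.
have k0 : 0 < k by lia.
have hs : s < k by rewrite /s ltn_pmod.
have hts : t != s.
  rewrite /s; have : t.+1 < k + k by lia.
  by move/modcase => [[? ->]|[? ->]]; lia.
have hc : caseA arc (a t) (b t) (c t) (a s) (b s) (c s) \/ caseB arc (a t) (b t) (c t) (a s) (b s) (c s).
  exact: cases (beats t ht).
have inK : forall i v, i < k -> v \in [set a i; b i; c i] -> v \in K.
  by move=> i v hi hv; apply/bigcupP; exists (Ordinal hi).
have outK : forall v, v \in K -> exists2 j, j < k & v \in [set a j; b j; c j].
  by move=> v /bigcupP [[j hj] _ hv]; exists j.
have inA : forall i, a i \in [set a i; b i; c i] by move=> i; rewrite !inE eqxx.
have inB : forall i, b i \in [set a i; b i; c i] by move=> i; rewrite !inE eqxx ?orbT.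
have inC : forall i, c i \in [set a i; b i; c i] by move=> i; rewrite !inE eqxx ?orbT.
have Hex : forall w, w \in K -> w \notin [set a t; b t; c t] -> Exact arc (a t) (b t) (c t) w.
  move=> w /outK [j hj hw] hwt; apply: (checker o dc hj hw ht).
  by apply: contra hwt => /eqP ->.
have Hadj : forall p, p \in [set a t; b t; c t] -> forall w, w \in K ->
    w \notin [set a t; b t; c t] -> arc p w || arc w p.
  move=> p hp w /outK [j hj hw] hwt; apply: (adjT dc ht hj _ hp hw).
  by apply: contra hwt => /eqP ->.
have HadjS : forall w, w \in K -> w \notin [set a t; b t; c t] -> w \notin [set a s; b s; c s] ->
    forall q, q \in [set a s; b s; c s] -> arc w q || arc q w.
  move=> w /outK [j hj hw] hwt hws q hq; apply: (adjT dc hj hs _ hw hq).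
  by apply: contra hws => /eqP <-.
have aTS : forall p q, p \in [set a t; b t; c t] -> q \in [set a s; b s; c s] -> arc p q || arc q p.
  by move=> p q hp hq; apply: (adjT dc ht hs hts hp hq).
have [mAB mBC _ _ _] := mp t ht.
have mCB : missing arc (c t) (b t) by rewrite missing_sym.
split.
- apply: (end_lemma o hc mAB).
  + exact: inK (inB t).
  + exact: inK hs (inA s).
  + exact: inK hs (inB s).
  + exact: Hex.
  + by move=> w wK wT; apply: Hadj.
  + by move=> w wK wT wS; split; apply: HadjS.
  + exact: aTS.
  + exact: aTS.
- rewrite set3C in Hex Hadj HadjS.
  apply: (end_lemma o (case_swap hc) mCB).
  + exact: inK (inB t).
  + exact: inK hs (inA s).
  + exact: inK hs (inB s).
  + by move=> w wK wT; rewrite -Ex_swap; apply: Hex.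
  + by move=> w wK wT; apply: Hadj; rewrite ?wT ?inE ?eqxx.
  + by move=> w wK wT wS; split; apply: HadjS.
  + exact: aTS.
  + exact: aTS.
- apply: (mid_lemma o hc mAB mBC).
  + exact: inK (inA t).
  + exact: inK (inC t).
  + exact: inK hs (inA s).
  + exact: inK hs (inB s).
  + exact: Hex.
  + by move=> w wK wT; apply: Hadj.
  + by move=> w wK wT wS; split; apply: HadjS.
  + exact: aTS.
  + exact: aTS.
  + exact: aTS.
  + exact: aTS.
Qed.
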